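(* Let $k\ge 3$. (a) For every finite field $F$, every subgroup $\Phi\le F^*$ of order $k$ and every generator $\varphi$ of $\Phi$, one has $\mathcal{O}(\mathbb{C},k)\subseteq\mathcal{O}_\varphi(F,k)$. (b) The set $\mathcal{Q}_k$ of exceptional primes is finite.
   Context: Notation: $\mathbf{k}=\{1,\dots,k-1\}$, $\mathbf{k}_0=\{0,1,\dots,k-1\}$. For a field $F$, a subgroup $\Phi\le F^*$ of order $k$ and a generator $\varphi$ of $\Phi$: a quadruple $(i,j\mid s,t)$ with $i,j,s,t\in\mathbf{k}$ and $i\neq s$ is an overlap (with respect to $\varphi$) if there is $\omega\in\mathbf{k}_0$ with $\varphi^\omega(\varphi^j-1)(\varphi^s-1)=(\varphi^i-1)(\varphi^t-1)$. The overlap is trivial if at least one of $i\equiv\pm j$, $j\equiv\pm t$, $t\equiv\pm s$, $s\equiv\pm i\pmod k$ holds, and nontrivial otherwise. $\mathcal{O}_\varphi(F,k)$ is the set of nontrivial overlaps. For $F=\mathbb{C}$ take $\Phi=\{z\in\mathbb{C}:z^k=1\}$ and $\varphi=\exp(2\pi\mathrm{i}/k)$, and write $\mathcal{O}(\mathbb{C},k)$. The set $\mathcal{Q}_k$ of exceptional primes is the set of primes $p$ such that $p\mid k$, or there exist a finite field $F$ of characteristic $p$, a subgroup $\Phi\le F^*$ of order $k$ and a generator $\varphi$ of $\Phi$ with $\mathcal{O}_\varphi(F,k)\neq\mathcal{O}(\mathbb{C},k)$. *)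

(* Defs.v *)
From HB Require Import structures.
From mathcomp Require Import all_boot all_order all_algebra all_field.
Set Implicit Arguments. Unset Strict Implicit. Unset Printing Implicit Defensive.
Import Order.TTheory GRing.Theory Num.Theory.
Local Open Scope ring_scope.

Definition pm_congr (k a b : nat) : bool :=
  (a == b %[mod k])%N || (a + b == 0 %[mod k])%N.

Definition overlap (R : comNzRingType) (phi : R) (k i j s t : nat) : Prop :=
  [/\ [&& (0 < i < k)%N, (0 < j < k)%N, (0 < s < k)%N & (0 < t < k)%N], i != s &
   (exists2 w : nat, (w < k)%N &
     phi ^+ w * (phi ^+ j - 1) * (phi ^+ s - 1) = (phi ^+ i - 1) * (phi ^+ t - 1))].

Definition trivial_quad (k i j s t : nat) : bool :=
  [|| pm_congr k i j, pm_congr k j t, pm_congr k t s | pm_congr k s i].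

(* membership in O_phi(F,k) *)
Definition nt_overlap (R : comNzRingType) (phi : R) (k i j s t : nat) : Prop :=
  overlap phi k i j s t /\ ~~ trivial_quad k i j s t.

(* exp(2 pi i / k) in algC: k.-root (-1) is the k-th root of -1 with nonnegative
   imaginary part and maximal real part, i.e. exp(i pi / k). *)
Definition zetaC (k : nat) : algC := (k.-root (-1)) ^+ 2.

(* membership in O(C,k) *)
Definition nt_overlapC (k i j s t : nat) : Prop := nt_overlap (zetaC k) k i j s t.

(* p is in Q_k *)
Definition exceptional_prime (k p : nat) : Prop :=
  prime p /\
  ((p %| k)%N \/
   exists (F : finFieldType) (phi : F),
     p \in [pchar F] /\ k.-primitive_root phi /\
     ~ (forall i j s t : nat, nt_overlap phi k i j s t <-> nt_overlapC k i j s t)).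

(* Main.v *)
Require Import Defs.
From HB Require Import structures.
From mathcomp Require Import all_boot all_order all_algebra all_field.
From mathcomp Require Import ring lra.
Import Order.TTheory GRing.Theory Num.Theory.
Local Open Scope ring_scope.

Lemma sq_le (R : realFieldType) (x y : R) : 0 <= x -> 0 <= y -> x^+2 <= y^+2 -> x <= y.
Proof. move=> hx hy h; case: (leP x y) => // hyx; nra. Qed.
Lemma sq_lt (R : realFieldType) (x y : R) : 0 <= x -> 0 <= y -> x^+2 < y^+2 -> x < y.
Proof. move=> hx hy h; case: (ltP x y) => // hyx; nra. Qed.

Section S. Variables (R : realFieldType) (a b c s : R).
Hypotheses (h1 : a^+2+b^+2 = 1) (h2 : c^+2+s^+2 = 1) (hb : 0 <= b) (hs : 0 <= s).
Lemma T1 : c <= a -> a < 1 -> b = 0 -> a = -1 /\ c = -1 /\ s = 0.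
Proof. move=> hca ha1 hb0. have : (a - 1) * (a + 1) = 0.
  have h1' := h1; rewrite hb0 expr0n /= addr0 in h1'. by rewrite mulrDr mulr1 mulrBl mul1r -expr2 h1'; ring.
move/eqP; rewrite mulf_eq0 subr_eq0 addr_eq0 => /orP[/eqP ha|/eqP ha]; first by move: ha1; rewrite ha ltxx.
have hc1 : c <= -1 by rewrite -ha.
have hp : 0 <= (1 - c) * (-1 - c) by apply: mulr_ge0; lra.
have he : (1 - c) * (-1 - c) = c^+2 - 1 by ring.
have hs2 : s^+2 <= 0.
  rewrite he in hp. move: hp h2; set X := c^+2; set Y := s^+2 => hp h2x; lra.
have hs0 : s = 0 by apply/eqP; rewrite -sqrf_eq0 eq_le hs2 sqr_ge0.
split => //; split => //. have h2' := h2. rewrite hs0 expr0n /= addr0 in h2'.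
have : (c-1)*(c+1) = 0 by rewrite (_ : (c-1)*(c+1) = c^+2 - 1); [rewrite h2' subrr | ring].
move/eqP; rewrite mulf_eq0 subr_eq0 addr_eq0 => /orP[/eqP hc|/eqP //]; lra. Qed.
Lemma T2 : 0 <= c -> c <= a -> b <= s. Proof. move=> hc hca. apply: sq_le => //.
have hp : 0 <= (a - c) * (a + c) by apply: mulr_ge0; lra.
have he : (a - c) * (a + c) = a^+2 - c^+2 by ring.
rewrite he in hp; move: hp h1 h2; set A := a^+2; set B := b^+2; set C := c^+2; set S := s^+2 => *; lra. Qed.
Lemma T3 : a <= 0 -> c <= a -> s <= b. Proof. move=> hc hca. apply: sq_le => //.
have hp : 0 <= (a - c) * (- a - c) by apply: mulr_ge0; lra.
have he : (a - c) * (- a - c) = c^+2 - a^+2 by ring.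
rewrite he in hp; move: hp h1 h2; set A := a^+2; set B := b^+2; set C := c^+2; set S := s^+2 => *; lra. Qed.
Lemma T4 : 0 <= c -> c <= a -> 0 <= s * a - c * b. Proof. move=> hc hca; have hbs := T2 hc hca.
have p1 : 0 <= (s - b) * a by apply: mulr_ge0; [rewrite subr_ge0 | exact: le_trans hca].
have p2 : 0 <= b * (a - c) by apply: mulr_ge0; rewrite // subr_ge0.
by rewrite (_ : s * a - c * b = (s - b) * a + b * (a - c)); [exact: addr_ge0 | ring]. Qed.
Lemma T5 : c <= 0 -> 0 <= a -> 0 <= s * a - c * b. Proof. move=> hc ha.
have p1 : 0 <= s * a by apply: mulr_ge0.
have p2 : 0 <= (- c) * b by apply: mulr_ge0; rewrite // oppr_ge0.
by rewrite (_ : s * a - c * b = s * a + (-c) * b); [exact: addr_ge0 | ring]. Qed.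
Lemma T6 : a <= 0 -> c <= a -> 0 <= s * a - c * b. Proof. move=> ha hca; have hbs := T3 ha hca.
have p1 : 0 <= (b - s) * (- a) by apply: mulr_ge0; rewrite ?subr_ge0 ?oppr_ge0.
have p2 : 0 <= b * (a - c) by apply: mulr_ge0; rewrite // subr_ge0.
by rewrite (_ : s * a - c * b = (b - s) * (- a) + b * (a - c)); [exact: addr_ge0 | ring]. Qed.
Lemma T7 : c < 0 -> a < 1 -> c < c * a + s * b. Proof. move=> hc ha.
have p1 : 0 < (- c) * (1 - a) by apply: mulr_gt0; rewrite ?subr_gt0 ?oppr_gt0.
have p2 : 0 <= s * b by apply: mulr_ge0.
rewrite -subr_gt0 (_ : c * a + s * b - c = (- c) * (1 - a) + s * b); [exact: ltr_wpDr | ring]. Qed.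
Lemma T8 : c = 0 -> 0 < b -> c < c * a + s * b. Proof. move=> hc hb0.
have hs1 : s = 1. have h2' := h2; rewrite hc expr0n /= add0r in h2'.
  have : (s - 1) * (s + 1) = 0 by rewrite (_ : (s-1)*(s+1) = s^+2 - 1); [rewrite h2' subrr | ring].
  move/eqP; rewrite mulf_eq0 subr_eq0 addr_eq0 => /orP[/eqP //|/eqP hs']; by move: hs; rewrite hs' ler0N1.
by rewrite hc hs1 mul0r mul1r add0r. Qed.
Lemma T9 : 0 < c -> c <= a -> a < 1 -> c < c * a + s * b. Proof. move=> hc hca ha; have hbs := T2 (ltW hc) hca.
have p1 : 0 <= (s - b) * b by apply: mulr_ge0; rewrite ?subr_ge0.
have p2 : 0 < (1 - a) * (1 + a - c).
  apply: mulr_gt0; rewrite subr_gt0 //. have : (0:R) < 1 := ltr01. move: hca hc => *. lra.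
have e1 : c * a + s * b - c = (s - b) * b + (1 - a) * (1 + a - c) + (a^+2 + b^+2 - 1) by ring.
rewrite h1 subrr addr0 in e1. by rewrite -subr_gt0 e1 ltr_wpDl. Qed.
Lemma U1 : a < c -> c < 1 -> 0 < s.
Proof. move=> hac hc1. rewrite lt0r hs andbT. apply/eqP => hs0.
have h2' := h2; rewrite hs0 expr0n /= addr0 in h2'.
have : (c - 1) * (c + 1) = 0 by rewrite (_ : (c-1)*(c+1) = c^+2 - 1); [rewrite h2' subrr | ring].
move/eqP; rewrite mulf_eq0 subr_eq0 addr_eq0 => /orP[/eqP hc|/eqP hc].
  by move: hc1; rewrite hc ltxx.
have ha1 : a < -1 by rewrite -hc.
have p : 0 < (1 - a) * (- 1 - a) by apply: mulr_gt0; rewrite subr_gt0 //; apply: lt_trans ha1 _; rewrite -subr_gt0 opprK (_ : 1 + 1 = 2%:R) // ltr0n.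
have e : (1 - a) * (- 1 - a) = a^+2 + b^+2 - 1 - b^+2 by ring.
rewrite e h1 subrr sub0r oppr_gt0 in p.
by move: (sqr_ge0 b); rewrite leNgt p.
Qed.
Lemma G2 : a < c -> c < 1 -> a < c * a + s * b.
Proof. move=> hac hc1; have hs0 := U1 hac hc1.
rewrite -subr_gt0 (_ : c * a + s * b - a = s * b - a * (1 - c)); last by ring.
rewrite subr_gt0.
case: (leP a 0) => ha0.
  case: (ltP a 0) => ha0'.
    apply: (@lt_le_trans _ _ 0); last exact: mulr_ge0.
    by rewrite nmulr_rlt0 ?subr_gt0.
  have ha : a = 0 by apply/eqP; rewrite eq_le ha0 ha0'.
  rewrite ha mul0r; apply: mulr_gt0 => //.
  have h1' := h1; rewrite ha expr0n /= add0r in h1'.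
  rewrite lt0r hb andbT; apply/eqP => hb0; move: h1'; rewrite hb0 expr0n /= => /eqP.
  by rewrite eq_sym oner_eq0.
apply: sq_lt; [apply: mulr_ge0; [exact: ltW | rewrite subr_ge0 ltW //] | exact: mulr_ge0 |].
have hc0 : 0 < c := lt_trans ha0 hac.
rewrite !exprMn (_ : s^+2 = 1 - c^+2); last by rewrite -h2; ring.
rewrite (_ : b^+2 = 1 - a^+2); last by rewrite -h1; ring.
rewrite -subr_gt0 (_ : (1 - c ^+ 2) * (1 - a ^+ 2) - a ^+ 2 * (1 - c) ^+ 2 = (1 - c) * ((1 - a) * (1 + 2%:R * a) + (c - a))); last by ring.
apply: mulr_gt0; first by rewrite subr_gt0.
apply: ltr_wpDl; last by rewrite subr_gt0.
apply: mulr_ge0; first by rewrite subr_ge0 ltW // (lt_trans hac).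
by rewrite addr_ge0 // mulr_ge0 // ltW.
Qed.

Lemma G1 : c <= a -> a < 1 -> 0 <= s * a - c * b /\ c < c * a + s * b.
Proof. move=> hca ha1.
have [hb0|hb0] := eqVneq b 0.
  have [ea [ec es]] := T1 hca ha1 hb0. rewrite ea ec es hb0 !mul0r !mulr0 subr0 addr0 mulrNN mulr1.
  by split => //; rewrite -subr_gt0 opprK (_ : 1 + 1 = 2%:R) // ltr0n.
have hbp : 0 < b by rewrite lt0r hb0 hb.
split.
  case: (leP 0 c) => hc; first exact: T4.
  case: (leP 0 a) => ha; first exact: T5 (ltW hc) ha.
  exact: T6 (ltW ha) hca.
case: (ltgtP c 0) => hc; [exact: T7 | exact: T9 | exact: T8].
Qed.
Lemma A1 : 1 <= a -> a = 1 /\ b = 0.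
Proof. move=> ha.
have p : 0 <= (a - 1) * (a + 1) by apply: mulr_ge0; [rewrite subr_ge0 | apply: addr_ge0 (le_trans ler01 ha) ler01].
have e : (a - 1) * (a + 1) = - b^+2 + (a^+2 + b^+2 - 1) by ring.
rewrite e h1 subrr addr0 oppr_ge0 in p.
have hb0 : b = 0 by apply/eqP; rewrite -sqrf_eq0 eq_le p sqr_ge0.
split => //. have h1' := h1; rewrite hb0 expr0n /= addr0 in h1'.
have : (a - 1) * (a + 1) = 0 by rewrite (_ : (a-1)*(a+1) = a^+2 - 1); [rewrite h1' subrr | ring].
move/eqP; rewrite mulf_eq0 subr_eq0 addr_eq0 => /orP[/eqP //|/eqP ha'].
by move: ha; rewrite ha' -subr_ge0 -opprD oppr_ge0 (_ : 1 + 1 = 2%:R) // leNgt ltr0n.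
Qed.
End S.
Definition rR (u : algC) : algR := in_algR (Creal_Re u).
Definition iR (u : algC) : algR := in_algR (Creal_Im u).
Lemma leRC (x y : algR) : (x <= y) = (algRval x <= algRval y). Proof. by []. Qed.
Lemma ltRC (x y : algR) : (x < y) = (algRval x < algRval y). Proof. by []. Qed.
Lemma eqR1 (x : algR) : algRval x = 1 -> x = 1. Proof. by move=> h; apply: val_inj. Qed.
Lemma valM (x y : algR) : algRval (x * y) = algRval x * algRval y. Proof. by rewrite rmorphM. Qed.
Lemma valB (x y : algR) : algRval (x - y) = algRval x - algRval y. Proof. by rewrite rmorphB. Qed.
Lemma valD (x y : algR) : algRval (x + y) = algRval x + algRval y. Proof. by rewrite rmorphD. Qed.
Lemma R1 (u : algC) : 'Re u ^+ 2 + 'Im u ^+ 2 = 1 -> (rR u) ^+ 2 + (iR u) ^+ 2 = 1.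
Proof. move=> h; apply: val_inj; change (algRval (rR u ^+ 2 + iR u ^+ 2) = algRval 1); by rewrite valD !rmorphXn /= h. Qed.

Lemma G1C (y w : algC) :
  'Re y ^+ 2 + 'Im y ^+ 2 = 1 -> 'Re w ^+2 + 'Im w ^+ 2 = 1 -> 0 <= 'Im y -> 0 <= 'Im w ->
  'Re w <= 'Re y -> 'Re y < 1 ->
  0 <= 'Im (w * y^*) /\ 'Re w < 'Re (w * y^*).
Proof.
move=> h1 h2 hb hs hca ha.
have := @G1 _ (rR y) (iR y) (rR w) (iR w) (@R1 y h1) (@R1 w h2) hb hs hca ha.
rewrite leRC ltRC valB valD !valM /= => -[p1 p2].
have -> : 'Im (w * y^*) = 'Im w * 'Re y - 'Re w * 'Im y by rewrite ImM Re_conj Im_conj; ring.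
have -> : 'Re (w * y^*) = 'Re w * 'Re y + 'Im w * 'Im y by rewrite ReM Re_conj Im_conj; ring.
by [].
Qed.

Lemma G2C (y w : algC) :
  'Re y ^+ 2 + 'Im y ^+ 2 = 1 -> 'Re w ^+2 + 'Im w ^+ 2 = 1 -> 0 <= 'Im y -> 0 <= 'Im w ->
  'Re y < 'Re w -> 'Re w < 1 -> 'Re y < 'Re (w * y^*).
Proof.
move=> h1 h2 hb hs hca ha.
have := @G2 _ (rR y) (iR y) (rR w) (iR w) (@R1 y h1) (@R1 w h2) hb hs hca ha.
rewrite ltRC valD !valM /= => p.
have -> : 'Re (w * y^*) = 'Re w * 'Re y + 'Im w * 'Im y by rewrite ReM Re_conj Im_conj; ring.
by [].
Qed.

Lemma unit_Re_lt1 (u : algC) : 'Re u ^+ 2 + 'Im u ^+ 2 = 1 -> u != 1 -> 'Re u < 1.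
Proof.
move=> h hu. rewrite real_ltNge ?Creal_Re ?rpred1 //; apply/negP => hle.
have := @A1 _ (rR u) (iR u) (@R1 u h) hle.
move=> [/(congr1 algRval) /= e1 /(congr1 algRval) /= e2].
by move: hu; rewrite [u]Crect e1 e2 mulr0 addr0 eqxx.
Qed.

Lemma unitC (u : algC) n : (0 < n)%N -> u ^+ n = 1 -> 'Re u ^+ 2 + 'Im u ^+ 2 = 1.
Proof.
move=> hn h. have hn1 : `|u| ^+ n = 1 by rewrite -normrX h normr1.
have hu : `|u| = 1 by apply/eqP; rewrite -(pexpr_eq1 hn) ?normr_ge0 // hn1.
by rewrite -normC2_Re_Im hu expr1n.
Qed.

Lemma max_root k (u : algC) : (1 < k)%N -> u ^+ k = -1 -> 'Re u <= 'Re (k.-root (-1)).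
Proof.
move=> hk hu; have k0 : (0 < k)%N by apply: ltnW.
case: (boolP (0 <= 'Im u)) => h; first exact: rootC_Re_max.
rewrite -Re_conj; apply: rootC_Re_max => //.
  by rewrite -rmorphXn /= hu rmorphN1.
rewrite Im_conj oppr_ge0 ltW //.
by rewrite real_ltNge ?Creal_Im ?rpred0.
Qed.

Lemma neg1_neq1 : (-1 : algC) != 1.
Proof. by rewrite -subr_eq0 -opprD oppr_eq0 (_ : 1 + 1 = 2%:R) // pnatr_eq0. Qed.

Lemma zeta_prim k : (1 < k)%N -> k.-primitive_root (zetaC k).
Proof.
move=> hk; have k0 : (0 < k)%N by apply: ltnW.
rewrite /zetaC; set y := k.-root (-1).
have yk : y ^+ k = -1 by rewrite rootCK.
have n0 : (0 < k * 2)%N by rewrite muln_gt0 k0.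
have y2k : y ^+ (k * 2) = 1 by rewrite exprM yk expr2 mulrNN mulr1.
have hy1 := @unitC y _ n0 y2k.
have hIy : 0 <= 'Im y by apply: Im_rootC_ge0.
have hmax : forall u, u ^+ k = -1 -> 'Re u <= 'Re y by move=> u; apply: max_root.
have hRy : 'Re y < 1.
  apply: unit_Re_lt1 => //; apply/negP => /eqP y1.
  by move: yk; rewrite y1 expr1n => /eqP; rewrite eq_sym (negbTE neg1_neq1).
have [g [pg hIg]] : exists g : algC, (k * 2).-primitive_root g /\ 0 <= 'Im g.
  have [g0 pg0] := C_prim_root_exists n0.
  case: (boolP (0 <= 'Im g0)) => h; first by exists g0.
  exists g0^*; split; first by rewrite fmorph_primitive_root.
  by rewrite Im_conj oppr_ge0 ltW // real_ltNge ?Creal_Im ?rpred0.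
have gk : g ^+ k = -1.
  have : (g ^+ k) ^+ 2 == 1 by rewrite -exprM prim_expr_order.
  rewrite sqrf_eq1 => /orP[/eqP|/eqP //].
  move/eqP; rewrite -(prim_order_dvd pg) => /(dvdn_leq k0).
  by rewrite leqNgt ltn_Pmulr.
pose v j := g * (y^*) ^+ j.
have ystar_k : (y^*) ^+ k = -1 by rewrite -rmorphXn /= yk rmorphN1.
have hyy : y * y^* = 1 by rewrite -normCK normC2_Re_Im hy1.
have hvS j : v j.+1 = v j * y^* by rewrite /v exprSr mulrA.
have hv0 : v 0%N = g by rewrite /v expr0 mulr1.
have ys2k : (y^*) ^+ (k * 2) = 1 by rewrite -rmorphXn /= y2k rmorph1.
have hvpow j : v j ^+ (k * 2) = 1.
  by rewrite /v exprMn prim_expr_order // -exprM mulnC exprM ys2k expr1n mul1r.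
have hvk j : v j ^+ k = - ((-1) ^+ j).
  by rewrite /v exprMn gk -exprM mulnC exprM ystar_k mulN1r.
have hvU j : 'Re (v j) ^+ 2 + 'Im (v j) ^+ 2 = 1 := @unitC (v j) _ n0 (hvpow j).
have step j : 0 <= 'Im (v j) -> 'Re (v j) <= 'Re y ->
    0 <= 'Im (v j.+1) /\ 'Re (v j) < 'Re (v j.+1).
  by move=> h1 h2; rewrite hvS; apply: G1C.
have hg : 'Re g <= 'Re y by apply: hmax.
have [j hj] : exists j, 'Re y < 'Re (v j).
  case: (boolP [exists j : 'I_(k * 2).+1, 'Re y < 'Re (v j)]) => [/existsP [j hj] | /existsPn hn].
    by exists j.
  have hle j : (j <= k * 2)%N -> 'Re (v j) <= 'Re y.
    move=> hj; have := hn (Ordinal (hj : (j < (k * 2).+1)%N)).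
    by rewrite /= real_leNgt ?Creal_Re.
  have ind j : (j <= k * 2)%N -> 0 <= 'Im (v j) /\ 'Re g <= 'Re (v j).
    elim: j => [|j IH] hj; first by rewrite hv0 lexx.
    have [h1 h2] := IH (ltnW hj).
    have [h3 h4] := step j h1 (hle j (ltnW hj)).
    by split => //; apply: le_trans h2 (ltW h4).
  have [h1 h2] := ind (k * 2).-1 (leq_pred _).
  have [_ h4] := step _ h1 (hle _ (leq_pred _)).
  have e : v ((k * 2).-1).+1 = g by rewrite prednK // /v ys2k mulr1.
  rewrite e in h4.
  by move: (lt_le_trans h4 h2); rewrite ltxx.
have [m Pm minm] := ex_minnP (ex_intro (fun j => 'Re y < 'Re (v j)) j hj).
have hlt i : (i < m)%N -> 'Re (v i) <= 'Re y.
  move=> him; rewrite real_leNgt ?Creal_Re //; apply/negP => hP.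
  by move: (minm i hP); rewrite leqNgt him.
have hIm i : (i <= m)%N -> 0 <= 'Im (v i).
  elim: i => [|i IH] hi; first by rewrite hv0.
  by have [] := step i (IH (ltnW hi)) (hlt i hi).
have hIw := hIm m (leqnn m).
have hodd : odd m.
  apply/negPn/negP => hev.
  have := hmax (v m); rewrite hvk -signr_odd (negbTE hev) expr0 => /(_ erefl) h.
  by move: (lt_le_trans Pm h); rewrite ltxx.
have hw1 : v m = 1.
  apply/eqP/negP => /negP hne.
  have hw := @unit_Re_lt1 (v m) (hvU m) hne.
  have := @G2C y (v m) hy1 (hvU m) hIy hIw Pm hw.
  have : (v m * y^*) ^+ k = -1 by rewrite exprMn hvk -signr_odd hodd expr1 opprK mul1r.
  move=> /hmax h1 h2. by move: (lt_le_trans h2 h1); rewrite ltxx.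
have gy : g = y ^+ m.
  move: hw1; rewrite /v => /(congr1 (fun x => x * y ^+ m)).
  by rewrite mul1r -mulrA -exprMn (mulrC _ y) hyy expr1n mulr1.
have [d pd dd] := prim_order_exists n0 y2k.
have ed : d = (k * 2)%N.
  apply/eqP; rewrite eqn_dvd dd /= (prim_order_dvd pg) gy -exprM mulnC exprM.
  by rewrite (prim_expr_order pd) expr1n.
rewrite ed in pd.
have := dvdn_prim_root pd (dvdn_mulr 2 (dvdnn k)).
by rewrite mulKn.
Qed.

Local Notation pZtoQ := (map_poly (intr : int -> rat)).
Local Notation pZtoC := (map_poly (intr : int -> algC)).
Local Notation pQtoC := (map_poly (ratr : rat -> algC)).

Definition Pz (w i j s t : nat) : {poly int} :=
  'X^w * ('X^j - 1) * ('X^s - 1) - ('X^i - 1) * ('X^t - 1).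

Lemma evalPz (R : comNzRingType) (x : R) w i j s t :
  (map_poly intr (Pz w i j s t)).[x] =
    x ^+ w * (x ^+ j - 1) * (x ^+ s - 1) - (x ^+ i - 1) * (x ^+ t - 1).
Proof. by rewrite /Pz rmorphB !rmorphM !rmorphB !rmorph1 !rmorphXn /= !map_polyX !hornerE. Qed.

Lemma ZQC (p : {poly int}) : pQtoC (pZtoQ p) = pZtoC p.
Proof. by rewrite -map_poly_comp; apply: eq_map_poly => a /=; rewrite rmorph_int. Qed.

Lemma minPhi k : (1 < k)%N -> forall q, root (pQtoC q) (zetaC k) = (pZtoQ 'Phi_k %| q).
Proof.
move=> hk; have [p0 [Dp0 _] dvp] := minCpolyP (zetaC k).
have e : p0 = pZtoQ 'Phi_k.
  apply: (@map_inj_poly _ _ (ratr : rat -> algC)); first exact: fmorph_inj.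
    exact: rmorph0.
  by rewrite -Dp0 (minCpoly_cyclotomic (zeta_prim k hk)) ZQC (Cintr_Cyclotomic (zeta_prim k hk)).
by move=> q; rewrite -e dvp.
Qed.

Lemma Phi_zeta k : (1 < k)%N -> (pZtoC 'Phi_k).[zetaC k] = 0.
Proof.
move=> hk; apply/eqP; rewrite -/(root _ _) (Cintr_Cyclotomic (zeta_prim k hk)) root_cyclotomic.
all: exact: (zeta_prim k hk).
Qed.

Lemma evalXn1 (F : fieldType) (x : F) n :
  (map_poly (intr : int -> F) ('X^n - 1)).[x] = x ^+ n - 1.
Proof. by rewrite rmorphB rmorph1 rmorphXn /= map_polyX !hornerE. Qed.

Lemma Phi_F (F : fieldType) (phi : F) k : k.-primitive_root phi ->
  (map_poly (intr : int -> F) 'Phi_k).[phi] = 0.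
Proof.
move=> pphi; have k0 := prim_order_gt0 pphi.
have := congr1 (fun p => (map_poly (intr : int -> F) p).[phi]) (prod_Cyclotomic k0).
rewrite /= evalXn1 prim_expr_order // subrr rmorph_prod horner_prod => /eqP.
rewrite prodf_seq_eq0 => /hasP [d dd /= /eqP hd].
have ddk : (d %| k)%N by rewrite (dvdn_divisors _ k0).
have d0 : (0 < d)%N := dvdn_gt0 k0 ddk.
case: (eqVneq d k) => [<- //|ne].
have := congr1 (fun p => (map_poly (intr : int -> F) p).[phi]) (prod_Cyclotomic d0).
rewrite /= evalXn1 rmorph_prod horner_prod (big_rem d) /=; last by rewrite -dvdn_divisors.
rewrite hd mul0r => /esym/eqP; rewrite subr_eq0 -(prim_order_dvd pphi) => hkd.
by move: ne; rewrite eqn_dvd ddk hkd.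
Qed.

Lemma part_a_poly k (P : {poly int}) : (1 < k)%N -> (pZtoC P).[zetaC k] = 0 ->
  forall (F : fieldType) (phi : F), k.-primitive_root phi ->
  (map_poly (intr : int -> F) P).[phi] = 0.
Proof.
move=> hk hP F phi pphi.
have mon := Cyclotomic_monic k.
have eP := Pdiv.RingMonic.rdivp_eq mon P.
set q := Pdiv.Ring.rdivp P 'Phi_k in eP; set r := Pdiv.Ring.rmodp P 'Phi_k in eP.
have r0 : r = 0.
  apply/eqP/negP => /negP rn0.
  have : pZtoQ 'Phi_k %| pZtoQ r.
    rewrite -(minPhi k hk) ZQC /root.
    have -> : r = P - q * 'Phi_k by rewrite {1}eP addrC addKr.
    by rewrite rmorphB rmorphM /= !hornerE hP Phi_zeta // mulr0 subrr.
  have nz : pZtoQ r != 0 by rewrite -size_poly_eq0 size_rat_int_poly size_poly_eq0.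
  move=> /(dvdp_leq nz).
  rewrite !size_rat_int_poly leqNgt Pdiv.Ring.ltn_rmodpN0 //.
  exact: monic_neq0.
by rewrite eP r0 addr0 rmorphM /= hornerE Phi_F // mulr0.
Qed.

Lemma bez k (P : {poly int}) : (1 < k)%N -> (pZtoC P).[zetaC k] != 0 ->
  exists c : int, c != 0 /\ exists U V : {poly int}, U * 'Phi_k + V * P = c%:P.
Proof.
move=> hk hP.
set Fq := pZtoQ 'Phi_k; set Pq := pZtoQ P.
have nzF : Fq != 0.
  by rewrite -size_poly_eq0 size_rat_int_poly size_poly_eq0 monic_neq0 // Cyclotomic_monic.
have cop : coprimep Fq Pq.
  rewrite /coprimep; set G := gcdp Fq Pq.
  have /dvdpP [h eh] := dvdp_gcdl Fq Pq; rewrite -/G in eh.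
  have nG : ~~ root (pQtoC G) (zetaC k).
    apply/negP; rewrite (minPhi k hk) => hd.
    have : Fq %| Pq by apply: dvdp_trans hd (dvdp_gcdr _ _).
    by rewrite -(minPhi k hk) /Pq ZQC /root (negbTE hP).
  have rF : root (pQtoC Fq) (zetaC k) by rewrite (minPhi k hk) dvdpp.
  have rh : root (pQtoC h) (zetaC k).
    move: rF; rewrite eh rmorphM rootM => /orP[//|]; by rewrite (negbTE nG).
  rewrite (minPhi k hk) in rh.
  have nzh : h != 0 by apply: contraNneq nzF => h0; rewrite eh h0 mul0r.
  have nzG : G != 0 by apply: contraNneq nzF => h0; rewrite eh h0 mulr0.
  have := dvdp_leq nzh rh; rewrite -/Fq eh size_mul //.
  have := size_poly_gt0 G; rewrite nzG => hG.
  move: hG; case: (size G) => [//|[//|m]] _.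
  by rewrite !addnS /= => h1; move: (leq_ltn_trans (leq_addr m (size h)) h1); rewrite ltnn.
have [[u v] /= e] := Bezout_eq1_coprimepP _ _ cop.
have [U0 [a a0 Du]] := rat_poly_scale u.
have [V0 [b b0 Dv]] := rat_poly_scale v.
exists (a * b); split; first by rewrite mulf_neq0.
exists (b *: U0), (a *: V0).
apply: (@map_inj_poly _ _ (intr : int -> rat)); [exact: intr_inj | exact: rmorph0 |].
have eu : pZtoQ U0 = a%:~R *: u by rewrite Du scalerA mulfV ?intr_eq0 // scale1r.
have ev : pZtoQ V0 = b%:~R *: v by rewrite Dv scalerA mulfV ?intr_eq0 // scale1r.
rewrite rmorphD !rmorphM /= !map_polyZ /= eu ev map_polyC /= -/Fq -/Pq.
rewrite -!mul_polyC.
transitivity ((a%:~R * b%:~R)%:P * (u * Fq + v * Pq) : {poly rat}); first by rewrite !polyCM; ring.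
by rewrite e mulr1 map_polyC /= polyCM.
Qed.

Lemma char_bound (F : fieldType) p (c : int) : p \in [pchar F] -> c != 0 ->
  (c%:~R : F) = 0 -> (p <= `|c|)%N.
Proof.
move=> hp hc h.
have h' : ((`|c|%N)%:R : F) == 0.
  case: c hc h => n _ /= h; first by rewrite -h.
  by move: h; rewrite NegzE mulrNz => /eqP; rewrite oppr_eq0.
rewrite -(dvdn_pcharf hp) in h'.
by apply: dvdn_leq h'; rewrite absz_gt0.
Qed.

Lemma fin1 n (B : nat -> nat -> Prop) :
  (forall x, (x < n)%N -> exists M, forall p, B x p -> (p < M)%N) ->
  exists M, forall p, (exists2 x, (x < n)%N & B x p) -> (p < M)%N.
Proof.
elim: n => [|n IH] H; first by exists 0%N => p [x].
have [M1 h1] := IH (fun x hx => H x (ltnW hx)).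
have [M2 h2] := H n (leqnn _).
exists (maxn M1 M2) => p [x hx hB].
rewrite leq_max; case: (ltngtP x n) => hxn.
- by rewrite h1 //; exists x.
- by move: hx; rewrite ltnS leqNgt hxn.
- by rewrite hxn in hB; rewrite h2 ?orbT.
Qed.

Definition bad k (w i j s t p : nat) : Prop :=
  exists (F : finFieldType) (phi : F), k.-primitive_root phi /\ p \in [pchar F] /\
    (map_poly (intr : int -> F) (Pz w i j s t)).[phi] = 0 /\
    (pZtoC (Pz w i j s t)).[zetaC k] != 0.

Lemma bad_bound k w i j s t : (1 < k)%N ->
  exists M, forall p, bad k w i j s t p -> (p < M)%N.
Proof.
move=> hk; case: (eqVneq (pZtoC (Pz w i j s t)).[zetaC k] 0) => h.
  by exists 0%N => p [F [phi [_ [_ [_ /negP]]]]]; rewrite h eqxx.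
have [c [c0 [U [V e]]]] := bez k _ hk h.
exists (`|c|.+1)%N => p [F [phi [pphi [hp [hP _]]]]].
rewrite ltnS; apply: (@char_bound _ p c hp c0).
have := congr1 (fun q => (map_poly (intr : int -> F) q).[phi]) e.
by rewrite /= rmorphD !rmorphM /= !hornerE hP Phi_F // !mulr0 addr0 map_polyC hornerC => <-.
Qed.

From Stdlib Require Classical_Prop Classical_Pred_Type.

Theorem theorem9 (k : nat) (hk : (3 <= k)%N) :
  (forall (F : finFieldType) (phi : F), k.-primitive_root phi ->
     forall i j s t : nat, nt_overlapC k i j s t -> nt_overlap phi k i j s t)
  /\ (exists N : nat, forall p : nat, exceptional_prime k p -> (p < N)%N).
Proof.
have hk1 : (1 < k)%N by apply: leq_trans hk.
have partA : forall (F : finFieldType) (phi : F), k.-primitive_root phi ->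
     forall i j s t : nat, nt_overlapC k i j s t -> nt_overlap phi k i j s t.
  move=> F phi pphi i j s t [[hb hne [w hw heq]] hnt]; split=> //; split=> //.
  exists w => //; apply/eqP; rewrite -subr_eq0 -evalPz; apply/eqP.
  apply: (part_a_poly k _ hk1) => //.
  by rewrite evalPz heq subrr.
split => //.
have [M hM] : exists M, forall p, (exists2 w, (w < k)%N & exists2 i, (i < k)%N &
    exists2 j, (j < k)%N & exists2 s, (s < k)%N & exists2 t, (t < k)%N &
    bad k w i j s t p) -> (p < M)%N.
  apply: fin1 => w _; apply: fin1 => i _; apply: fin1 => j _; apply: fin1 => s _.
  apply: fin1 => t _; exact: bad_bound.
exists (maxn k.+1 M) => p [hpr [hdiv | [F [phi [hp [pphi hne]]]]]].
  by rewrite leq_max ltnS dvdn_leq ?(leq_trans _ hk).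
apply Classical_Pred_Type.not_all_ex_not in hne; case: hne => i hne.
apply Classical_Pred_Type.not_all_ex_not in hne; case: hne => j hne.
apply Classical_Pred_Type.not_all_ex_not in hne; case: hne => s hne.
apply Classical_Pred_Type.not_all_ex_not in hne; case: hne => t hne.
have hB : ~ nt_overlapC k i j s t.
  by move=> hB; apply: hne; split => // _; apply: partA.
have hA : nt_overlap phi k i j s t.
  case: (Classical_Prop.classic (nt_overlap phi k i j s t)) => // hA.
  by exfalso; apply: hne; split => // /hB.
case: hA => [[hb hne' [w hw heq]] hnt].
have hz : (pZtoC (Pz w i j s t)).[zetaC k] != 0.
  apply/negP => /eqP hz; apply: hB; split => //; split => //; exists w => //.
  by apply/eqP; rewrite -subr_eq0 -evalPz hz.
case/and4P: hb => /andP[_ hi] /andP[_ hj] /andP[_ hs] /andP[_ ht].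
rewrite leq_max; apply/orP; right; apply: hM.
exists w => //; exists i => //; exists j => //; exists s => //; exists t => //.
exists F, phi; split => //; split => //; split => //.
by rewrite evalPz heq subrr.
Qed.
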